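(* Let $X$ be a compact antipodal metric space. Then $\mathrm{rad}(\mathbf{E}(X))=\frac{\mathrm{diam}(X)}{2}$, and the constant function $f_0\equiv\frac{\mathrm{diam}(X)}{2}$ is the unique center of $\mathbf{E}(X)$.
   Context: A metric space $X$ is antipodal if for every $x\in X$ there exists $\bar x\in X$ with $d_X(x,\bar x)=d_X(x,y)+d_X(y,\bar x)$ for all $y\in X$. For a metric space $X$, $\Delta(X)=\{f:X\to\mathbb{R}\text{ bounded}:f(x)+f(x')\ge d_X(x,x')\}$ and the tight span $\mathbf{E}(X)$ is the set of pointwise-minimal elements of $\Delta(X)$ with the sup-norm metric. For a bounded metric space $Y$, $\mathrm{rad}(Y)=\inf_{x\in Y}\sup_{y\in Y}d_Y(x,y)$, and $x_0\in Y$ is a center if $\sup_{y\in Y}d_Y(x_0,y)=\mathrm{rad}(Y)$. *)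

(* Defs.v *)
From mathcomp Require Import all_boot all_order all_algebra.
From mathcomp Require Import all_classical all_reals.
Set Implicit Arguments. Unset Strict Implicit. Unset Printing Implicit Defensive.
Import Order.TTheory GRing.Theory Num.Theory.
Local Open Scope classical_set_scope.
Local Open Scope ring_scope.

Section Defs.
Variable R : realType.

Definition is_metric (T : Type) (d : T -> T -> R) : Prop :=
  (forall x y, 0 <= d x y) /\
  (forall x y, d x y = 0 <-> x = y) /\
  (forall x y, d x y = d y x) /\
  (forall x y z, d x z <= d x y + d y z).

Definition metric_open (T : Type) (d : T -> T -> R) (U : set T) : Prop :=
  forall x, U x -> exists r : R, 0 < r /\ forall y, d x y < r -> U y.

Definition metric_compact (T : Type) (d : T -> T -> R) : Prop :=
  forall (I : Type) (U : I -> set T),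
    (forall i, metric_open d (U i)) -> (forall x, exists i, U i x) ->
    exists F : set I, finite_set F /\ forall x, exists i, F i /\ U i x.

Definition antipodal (T : Type) (d : T -> T -> R) : Prop :=
  forall x, exists xbar, forall y, d x xbar = d x y + d y xbar.

Definition bounded_fun (T : Type) (f : T -> R) : Prop :=
  exists M : R, forall x, `|f x| <= M.

Definition Delta (T : Type) (d : T -> T -> R) : set (T -> R) :=
  [set f | bounded_fun f /\ forall x x', d x x' <= f x + f x'].

Definition tight_span (T : Type) (d : T -> T -> R) : set (T -> R) :=
  [set f | Delta d f /\
     forall g, Delta d g -> (forall x, g x <= f x) -> g = f].

Definition sup_dist (T : Type) (f g : T -> R) : R :=
  sup [set `|f x - g x| | x in [set: T]].

Definition diameter (T : Type) (d : T -> T -> R) : R :=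
  sup [set d p.1 p.2 | p in [set: T * T]].

Definition ecc (U : Type) (dist : U -> U -> R) (Y : set U) (x : U) : R :=
  sup [set dist x y | y in Y].

Definition radius (U : Type) (dist : U -> U -> R) (Y : set U) : R :=
  inf [set ecc dist Y x | x in Y].

Definition is_center (U : Type) (dist : U -> U -> R) (Y : set U) (x0 : U) : Prop :=
  Y x0 /\ ecc dist Y x0 = radius dist Y.

End Defs.

(* Main.v *)
Require Import Defs.
From mathcomp Require Import all_boot all_order all_algebra.
From mathcomp Require Import all_classical all_reals.
From mathcomp Require Import lra.
Import Order.TTheory GRing.Theory Num.Theory.
Local Open Scope classical_set_scope.
Local Open Scope ring_scope.

Lemma normb {R : realType} (x : R) : x <= `|x| /\ - x <= `|x|.
Proof. split; [exact: ler_norm | by rewrite -normrN ler_norm]. Qed.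

Lemma sup_le_b (R : realType) (E : set R) (b : R) :
  E !=set0 -> (forall x, E x -> x <= b) -> sup E <= b.
Proof. by move=> ne ub; apply: ge_sup. Qed.

Lemma le_sup_b (R : realType) (E : set R) (b x : R) :
  (forall y, E y -> y <= b) -> E x -> x <= sup E.
Proof. by move=> ub Ex; apply: ub_le_sup => //; exists b. Qed.

Lemma antip_const (R : realType) (T : Type) (d : T -> T -> R) :
  is_metric d -> forall x xb y yb,
  (forall z, d x xb = d x z + d z xb) -> (forall z, d y yb = d y z + d z yb) ->
  d x xb = d y yb.
Proof.
move=> [d0 [dz [ds dt]]] x xb y yb hx hy.
have h1 := hx y; have h2 := hx yb; have h3 := hy x; have h4 := hy xb.
rewrite (ds y x) (ds xb yb) in h3 h4. lra.
Qed.

Theorem proposition2p25 (R : realType) (T : Type) (d : T -> T -> R) :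
  is_metric d -> metric_compact d -> antipodal d ->
  radius (@sup_dist R T) (tight_span d) = diameter d / 2 /\
  (forall f : T -> R,
     is_center (@sup_dist R T) (tight_span d) f <-> f = (fun _ => diameter d / 2)).
Proof.
move=> hm _ ha.
have hm' := hm; move: hm' => [d0 [dz [ds dt]]].
have dxx : forall x, d x x = 0 by move=> x; apply/dz.
case: (pselect (exists x : T, True)) => [[x0 _]|hT]; last first.
  have allf : forall f g : T -> R, f = g.
    by move=> f g; apply: funext => x; case: hT; exists x.
  have sd0 : forall f g : T -> R, sup_dist f g = 0.
    move=> f g; rewrite /sup_dist.
    have -> : [set `|f x - g x| | x in [set: T]] = set0.
      by apply/seteqP; split=> r // [x _ _]; case: hT; exists x.
    exact: sup0.
  have ecc0 : forall f, ecc (@sup_dist R T) (tight_span d) f = 0.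
    move=> f; rewrite /ecc.
    have -> : [set sup_dist f y | y in tight_span d] = [set 0].
      apply/seteqP; split=> r.
        by move=> [y _ <-]; rewrite sd0.
      move=> ->; exists f; last by rewrite sd0.
      split; first by split; [exists 0 => x; case: hT; exists x|
                              move=> x; case: hT; exists x].
      by move=> g _ _; apply: allf.
    exact: sup1.
  have rad0 : radius (@sup_dist R T) (tight_span d) = 0.
    rewrite /radius.
    have -> : [set ecc (@sup_dist R T) (tight_span d) x | x in tight_span d] = [set 0].
      apply/seteqP; split=> r.
        by move=> [y _ <-]; rewrite ecc0.
      move=> ->; exists (fun _ => 0); last by rewrite ecc0.
      split; first by split; [exists 0 => x; case: hT; exists x|
                              move=> x; case: hT; exists x].
      by move=> g _ _; apply: allf.
    exact: inf1.
  have diam0 : diameter d = 0.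
    rewrite /diameter.
    have -> : [set d p.1 p.2 | p in [set: T * T]] = set0.
      by apply/seteqP; split=> r // [[x y] _ _]; case: hT; exists x.
    exact: sup0.
  rewrite rad0 diam0 mul0r; split => // f; split.
    by move=> _; apply: allf.
  move=> _; split; last by rewrite rad0 ecc0.
  split; first by split; [exists 0 => x; case: hT; exists x|
                          move=> x; case: hT; exists x].
  by move=> g _ _; apply: allf.
have [x0b hx0b] := ha x0.
set D := d x0 x0b.
have HD : forall x xb, (forall y, d x xb = d x y + d y xb) -> d x xb = D.
  by move=> x xb hx; exact: (@antip_const R T d hm _ _ _ _ hx hx0b).
have Hle : forall y z, d y z <= D.
  move=> y z; have [yb hyb] := ha y; rewrite -(HD _ _ hyb) (hyb z).
  by have := d0 z yb; lra.
have D0 : 0 <= D by apply: d0.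
have diamD : diameter d = D.
  apply/le_anti/andP; split.
    apply: sup_le_b; first by exists (d x0 x0), (x0, x0).
    by move=> r [p _ <-].
  apply: (@le_sup_b R _ D); first by move=> r [p _ <-]; apply: Hle.
  by exists (x0, x0b).
rewrite diamD.
set f0 := fun _ : T => D / 2.
set E := tight_span d.
have Ebnd : forall f, E f -> forall x, 0 <= f x <= D.
  move=> f [[[M hM] hf] hmin] x; apply/andP; split.
    by have := hf x x; rewrite dxx; lra.
  pose g := fun y => if f y <= D then f y else D.
  have fge0 : forall y, 0 <= f y by move=> y; have := hf y y; rewrite dxx; lra.
  have gD : Delta d g.
    split.
      exists D => y; rewrite /g; case: ifP => h.
        by rewrite ger0_norm ?fge0 ?h.
      by rewrite ger0_norm.
    move=> y z; rewrite /g; have := hf y z; have := Hle y z;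
    have := fge0 y; have := fge0 z.
    by case: (leP (f y) D) => h1; case: (leP (f z) D) => h2; lra.
  have eqg : g = f.
    apply: hmin gD _ => y; rewrite /g; case: (leP (f y) D) => h; lra.
  have := congr1 (fun h => h x) eqg; rewrite /g /=; case: (leP (f x) D) => h; lra.
have f0E : E f0.
  split.
    split; first by exists (D / 2) => x; rewrite /f0 ger0_norm //; lra.
    by move=> x y; rewrite /f0; have := Hle x y; lra.
  move=> g [_ hg] hle; apply: funext => x.
  have [xb hxb] := ha x.
  have := hg x xb; rewrite (HD _ _ hxb); have := hle x; have := hle xb.
  rewrite /f0 => h1 h2 h3; apply/le_anti/andP; split => //; lra.
have dxE : forall x, E (d x).
  move=> x; split.
    split; first by exists D => y; rewrite ger0_norm.
    by move=> y z; rewrite (ds x y); apply: dt.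
  move=> g [_ hg] hle; apply: funext => y.
  have gx : g x = 0.
    by have := hg x x; have := hle x; rewrite dxx; lra.
  have := hg x y; rewrite gx add0r => h; apply/le_anti/andP; split => //.
have sdle : forall f g, E f -> E g -> forall z, `|f z - g z| <= sup_dist f g.
  move=> f g Ef Eg z; apply: (@le_sup_b R _ D); last by exists z.
  move=> r [y _ <-]; have /andP[a b] := Ebnd f Ef y;
  have /andP[c e] := Ebnd g Eg y.
  have [h1 h2] := normb (f y - g y).
  by rewrite ler_norml; apply/andP; split; lra.
have sdD : forall f g, E f -> E g -> sup_dist f g <= D.
  move=> f g Ef Eg; apply: sup_le_b; first by exists `|f x0 - g x0|, x0.
  move=> r [y _ <-]; have /andP[a b] := Ebnd f Ef y;
  have /andP[c e] := Ebnd g Eg y.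
  by rewrite ler_norml; apply/andP; split; lra.
have eccge : forall f g, E f -> E g -> sup_dist f g <= ecc (@sup_dist R T) E f.
  move=> f g Ef Eg; apply: (@le_sup_b R _ D); last by exists g.
  by move=> r [h Eh <-]; apply: sdD.
have eccf0 : ecc (@sup_dist R T) E f0 <= D / 2.
  apply: sup_le_b; first by exists (sup_dist f0 f0), f0.
  move=> r [g Eg <-]; apply: sup_le_b; first by exists `|f0 x0 - g x0|, x0.
  move=> s [y _ <-]; have /andP[c e] := Ebnd g Eg y.
  by rewrite /f0 ler_norml; apply/andP; split; lra.
have eccgeD : forall f, E f -> D / 2 <= ecc (@sup_dist R T) E f.
  move=> f Ef.
  have h1 := eccge _ _ Ef (dxE x0); have h2 := eccge _ _ Ef (dxE x0b).
  have h3 := sdle _ _ Ef (dxE x0) x0; have h4 := sdle _ _ Ef (dxE x0b) x0.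
  have [h5 h6] := normb (f x0 - d x0 x0); have [h7 h8] := normb (f x0 - d x0b x0).
  rewrite dxx in h3 h5 h6; rewrite (ds x0b x0) -/D in h4 h7 h8.
  lra.
have eccgt : forall f, E f -> f <> f0 -> D / 2 < ecc (@sup_dist R T) E f.
  move=> f Ef nf.
  have [z hz] : exists z, f z <> D / 2.
    apply: contrapT => hn; apply: nf; apply: funext => z.
    by apply: contrapT => h; apply: hn; exists z.
  have [h|h] : D / 2 < f z \/ f z < D / 2.
    by case: (ltgtP (f z) (D / 2)) => h; [right|left|].
    have h1 := eccge _ _ Ef (dxE z); have h3 := sdle _ _ Ef (dxE z) z.
    have [h5 h6] := normb (f z - d z z); rewrite dxx in h3 h5 h6; lra.
  have [zb hzb] := ha z.
  have h1 := eccge _ _ Ef (dxE zb); have h3 := sdle _ _ Ef (dxE zb) z.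
  have [h5 h6] := normb (f z - d zb z); rewrite (ds zb z) (HD _ _ hzb) in h3 h5 h6; lra.
have eccf0e : ecc (@sup_dist R T) E f0 = D / 2.
  by apply/le_anti/andP; split => //; apply: eccgeD.
have radD : radius (@sup_dist R T) E = D / 2.
  apply/le_anti/andP; split.
    rewrite -eccf0e; apply: ge_inf; last by exists f0.
    by exists (D / 2) => r [f Ef <-]; apply: eccgeD.
  apply: lb_le_inf; first by exists (ecc (@sup_dist R T) E f0), f0.
  by move=> r [f Ef <-]; apply: eccgeD.
split => // f; split.
  move=> [Ef he]; rewrite radD in he.
  case: (pselect (f = f0)) => // nf.
  by have := eccgt f Ef nf; rewrite he ltxx.
by move=> ->; split => //; rewrite radD.
Qed.
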